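(* Let $k$ be a field of characteristic $0$, $L/k$ a field extension, and $S\in\mathbf{Fam}_L$ with data $a,b,t_0\in L$ (see context). Then $S$ contains a family of trisections defined over $L$ with a single free parameter $\gamma$, namely curves on $\mathcal{E}$ of the form $y=axt+bx+c(\gamma)t^3+d(\gamma)t^2+e(\gamma)t+\gamma$ with $c(\gamma),d(\gamma),e(\gamma)\in L$, each of which has a triple singularity at the point $Q=\big((at_0+b)^2/3,\ (at_0+b)^3/6+f(t_0)/(2(at_0+b)),\ t_0\big)$.
   Context: $S$ is a del Pezzo surface of degree one given in $\mathbb{P}(2,3,1,1)$, coordinates $(X:Y:Z:W)$, by $Y^2=X^3+F(Z,W)X+G(Z,W)$ with $F,G\in k[Z,W]$ homogeneous of degrees $4,6$; $f(t)=F(t,1)$, $g(t)=G(t,1)$; $\mathcal{E}:y^2=x^3+f(t)x+g(t)$ is the rational elliptic surface obtained by blowing up the base point of $|-K_S|$ ($t=Z/W$). A trisection is a member of $|-3K_S|$, realized on $\mathcal{E}$ as a curve $y=\alpha xt+\beta x+ct^3+dt^2+et+h$. $S\in\mathbf{Fam}_L$ means there exist $a,b,t_0\in L$ with $t_0\neq0$, $at_0+b\neq0$, $f(t_0)\neq-(at_0+b)^4/3$, such that $t_0$ is a double root of $P(t)=-f(t)^2/4+(at+b)^4f(t)/6+(at+b)^2g(t)+(at+b)^8/108$. *)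

(* Defs.v *)
From HB Require Import structures.
From mathcomp Require Import all_boot all_order all_algebra.
Set Implicit Arguments. Unset Strict Implicit. Unset Printing Implicit Defensive.
Import Order.TTheory GRing.Theory Num.Theory.
Local Open Scope ring_scope.

Section Defs.
Variable L : fieldType.

Definition Ppoly (f g : {poly L}) (a b : L) : {poly L} :=
  let l := a *: 'X + b%:P in
  - (4%:R)^-1 *: f ^+ 2 + (6%:R)^-1 *: (l ^+ 4 * f) + l ^+ 2 * g
  + (108%:R)^-1 *: l ^+ 8.

(* The defining condition of Fam_L, for the given data a b t0 (f, g already over L).
   "double root" = root of multiplicity at least 2. *)
Definition FamL_data (f g : {poly L}) (a b t0 : L) : Prop :=
  [/\ t0 != 0, a * t0 + b != 0,
      f.[t0] != - (a * t0 + b) ^+ 4 / 3%:R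
    & (('X - t0%:P) ^+ 2 %| Ppoly f g a b)%R].

(* Bivariate polynomials in (x,t): outer variable x, inner variable t. *)
Definition tvar : {poly {poly L}} := ('X : {poly L})%:P.

Definition tris_h (alpha beta c d e h0 : L) : {poly {poly L}} :=
  (alpha *: 'X + beta%:P)%:P * 'X
  + (c *: 'X ^+ 3 + d *: 'X ^+ 2 + e *: 'X + h0%:P)%:P.

(* Equation in the (x,t)-plane of the curve {y = h} on  y^2 = x^3 + f(t) x + g(t):
   H(x,t) = h(x,t)^2 - x^3 - f(t) x - g(t). *)
Definition curve_eq (f g : {poly L}) (h : {poly {poly L}}) : {poly {poly L}} :=
  h ^+ 2 - 'X ^+ 3 - f%:P * 'X - g%:P.

Definition shift2 (p : {poly {poly L}}) (x0 t0 : L) : {poly {poly L}} :=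
  map_poly (fun q : {poly L} => q \Po ('X + t0%:P)) (p \Po ('X + (x0%:P)%:P)).

Definition mult_ge (p : {poly {poly L}}) (x0 t0 : L) (m : nat) : Prop :=
  forall i j : nat, (i + j < m)%N -> ((shift2 p x0 t0)`_i)`_j = 0.

(* Since the curve is the graph y = h over
   the plane curve H = 0, its multiplicity at Q is that of H at (x0,t0). *)
Definition triple_sing_at (f g : {poly L}) (h : {poly {poly L}}) (x0 y0 t0 : L)
  : Prop :=
  [/\ (h.[x0%:P]).[t0] = y0,
      mult_ge (curve_eq f g h) x0 t0 3
    & ~ mult_ge (curve_eq f g h) x0 t0 4].

Definition Qx (a b t0 : L) : L := (a * t0 + b) ^+ 2 / 3%:R.
Definition Qy (f : {poly L}) (a b t0 : L) : L :=
  (a * t0 + b) ^+ 3 / 6%:R + f.[t0] / (2%:R * (a * t0 + b)).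

End Defs.

(* Main.v *)
Require Import Defs.
From HB Require Import structures.
From mathcomp Require Import all_boot all_order all_algebra.
From mathcomp Require Import ring.
Import GRing.Theory.
Local Open Scope ring_scope.

Lemma taylor3 (L : fieldType) (q : {poly L}) :
  q = (q`_0)%:P + (q`_1)%:P * 'X + (q`_2)%:P * 'X^2 + 'X^3 * drop_poly 3 q.
Proof.
rewrite -{1}(poly_take_drop 3 q) [_ * 'X^3]mulrC; congr (_ + _).
apply/polyP => i; rewrite coef_take_poly !coefD !coefMXn !coefMX !coefC.
by case: i => [|[|[|i]]]; rewrite /= ?(add0r, addr0).
Qed.

Lemma coef_XaVb (L : fieldType) (m n i j : nat) (p : {poly {poly L}}) :
  ((i < m) || (j < n))%N -> ((('X^m * (tvar L ^+ n * p))`_i)`_j) = 0.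
Proof.
rewrite coefXnM; case: ltnP => [_ _|_ /= Hj]; first by rewrite coef0.
by rewrite /tvar -rmorphXn /= coefCM coefXnM Hj.
Qed.

Lemma nz_nat (k L : fieldType) (iota : {rmorphism k -> L}) :
  [pchar k] =i pred0 -> forall n, (n.+1%:R : L) != 0.
Proof.
move=> /pcharf0P H n; rewrite -(rmorph_nat iota) fmorph_eq0 H //.
Qed.

Lemma cpXn (R : comNzRingType) (p r : {poly R}) n : (p ^+ n) \Po r = (p \Po r) ^+ n.
Proof. exact: rmorphXn. Qed.

Section Scal.
Variable L : fieldType.
Variables (a b t0 F0 F1 F2 G0 G1 G2 gm : L).
Definition l0 := a * t0 + b.
Definition x0 := l0 ^+ 2 / 3%:R.
Definition y0 := l0 ^+ 3 / 6%:R + F0 / (2%:R * l0).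
Definition C0 := y0 - l0 * x0.
Definition C1 := (F1 - 2%:R * a * y0) / (2%:R * l0) - a * x0.
Definition C2 := (F2 * x0 + G2 - (a * x0 + C1) ^+ 2) / (2%:R * y0).
Definition cc := (C0 - C1 * t0 + C2 * t0 ^+ 2 - gm) / t0 ^+ 3.
Definition dd := C2 - 3%:R * cc * t0.
Definition ee := C1 - 2%:R * C2 * t0 + 3%:R * cc * t0 ^+ 2.

Hypothesis hn : forall n, (n.+1%:R : L) != 0.
Hypothesis ht0 : t0 != 0.
Hypothesis hl0 : a * t0 + b != 0.
Hypothesis hF0 : F0 != - (a * t0 + b) ^+ 4 / 3%:R.
Definition p0 := - (4%:R)^-1 * F0^+2 + (6%:R)^-1 * ((a*t0+b)^+4 * F0) + (a*t0+b)^+2 * G0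
     + (108%:R)^-1 * (a*t0+b)^+8.
Definition p1 := - (4%:R)^-1 * (2%:R * F0 * F1) + (6%:R)^-1 * (4%:R * a * (a*t0+b)^+3 * F0
     + (a*t0+b)^+4 * F1) + 2%:R*a*(a*t0+b)*G0 + (a*t0+b)^+2 * G1
     + (108%:R)^-1 * (8%:R * a * (a*t0+b)^+7).
Hypothesis hp0 : p0 = 0.
Hypothesis hp1 : p1 = 0.

Lemma y0_nz : y0 != 0.
Proof.
apply: contra hF0; rewrite /y0 /l0 => /eqP H; apply/eqP.
have h2 : (2%:R : L) != 0 by exact: hn.
have h3 : (3%:R : L) != 0 by exact: hn.
have h6 : (6%:R : L) != 0 by exact: hn.
transitivity (((a*t0+b)^+3/6%:R + F0/(2%:R*(a*t0+b))) * (2%:R * (a*t0+b)) - (a*t0+b)^+4/3%:R).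
  by field; rewrite h2 h3 h6 hl0.
by rewrite H mul0r sub0r mulNr.
Qed.

Let h2 : (2%:R : L) != 0. Proof. exact: hn. Qed.
Let h3 : (3%:R : L) != 0. Proof. exact: hn. Qed.
Let h4 : (4%:R : L) != 0. Proof. exact: hn. Qed.
Let h6 : (6%:R : L) != 0. Proof. exact: hn. Qed.
Let h108 : (108%:R : L) != 0. Proof. exact: hn. Qed.

Lemma S0E : cc * t0^+3 + dd * t0^+2 + ee * t0 + gm = C0.
Proof. rewrite /ee /dd /cc. field. by rewrite ht0. Qed.
Lemma S1E : 3%:R * cc * t0^+2 + 2%:R * dd * t0 + ee = C1.
Proof. rewrite /ee /dd. ring. Qed.
Lemma S2E : 3%:R * cc * t0 + dd = C2.
Proof. rewrite /dd. ring. Qed.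
Lemma Y0E : (a * t0 + b) * x0 + C0 = y0.
Proof. rewrite /C0 /l0. ring. Qed.

Lemma k00 : y0 ^+ 2 - x0 ^+ 3 - F0 * x0 - G0 = 0.
Proof.
have hy := y0_nz.
transitivity (- p0 / (a * t0 + b) ^+ 2); last by rewrite hp0 oppr0 mul0r.
rewrite /p0 /y0 /x0 /l0. field. by rewrite h2 h3 h6 h4 h108 hl0.
Qed.
Lemma k10 : 2%:R * y0 * (a * t0 + b) - 3%:R * x0 ^+ 2 - F0 = 0.
Proof. rewrite /y0 /x0 /l0. field. by rewrite h2 h3 h6 hl0. Qed.
Lemma k20 : (a * t0 + b) ^+ 2 - 3%:R * x0 = 0.
Proof. rewrite /x0 /l0. field. by rewrite h3. Qed.
Lemma k11 : 2%:R * (a * t0 + b) * (a * x0 + C1) + 2%:R * y0 * a - F1 = 0.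
Proof. rewrite /C1 /l0. field. by rewrite h2 hl0. Qed.
Lemma k01 : 2%:R * y0 * (a * x0 + C1) - F1 * x0 - G1 = 0.
Proof.
transitivity (- p1 / (a * t0 + b) ^+ 2 + 2%:R * a * p0 / (a * t0 + b) ^+ 3);
  last by rewrite hp0 hp1 oppr0 !(mul0r, mulr0) addr0.
rewrite /p0 /p1 /C1 /y0 /x0 /l0. field. by rewrite h2 h3 h6 h4 h108 hl0.
Qed.
Lemma k02 : (a * x0 + C1) ^+ 2 + 2%:R * y0 * C2 - F2 * x0 - G2 = 0.
Proof.
have hy := y0_nz.
rewrite /C2. field. by rewrite h2 hy.
Qed.
End Scal.
Arguments l0 {L}. Arguments x0 {L}. Arguments y0 {L}. Arguments C0 {L}. Arguments C1 {L}. Arguments C2 {L}.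
Arguments cc {L}. Arguments dd {L}. Arguments ee {L}. Arguments p0 {L}. Arguments p1 {L}.

Lemma Pexp (L : fieldType) (f g : {poly L}) (a b t0 F0 F1 F2 G0 G1 G2 : L) (Fr Gr : {poly L}) :
  f \Po ('X + t0%:P) = F0%:P + F1%:P * 'X + F2%:P * 'X^2 + 'X^3 * Fr ->
  g \Po ('X + t0%:P) = G0%:P + G1%:P * 'X + G2%:P * 'X^2 + 'X^3 * Gr ->
  Ppoly f g a b \Po ('X + t0%:P) =
   (p0 a b t0 F0 G0)%:P + (p1 a b t0 F0 F1 G0 G1)%:P * 'X
 + 'X^2 * ((((- 2%:R) * F0 * F2 * (4%:R)^-1) + (6%:R * F0 * a ^+ 2 * b ^+ 2 * (6%:R)^-1) + (12%:R * F0 * a ^+ 3 * b * (6%:R)^-1 * t0) + (6%:R * F0 * a ^+ 4 * (6%:R)^-1 * t0 ^+ 2) + (4%:R * F1 * a * b ^+ 3 * (6%:R)^-1) + (12%:R * F1 * a ^+ 2 * b ^+ 2 * (6%:R)^-1 * t0) + (12%:R * F1 * a ^+ 3 * b * (6%:R)^-1 * t0 ^+ 2) + (4%:R * F1 * a ^+ 4 * (6%:R)^-1 * t0 ^+ 3) + ((- 1%:R) * F1 ^+ 2 * (4%:R)^-1) + (4%:R * F2 * a * b ^+ 3 * (6%:R)^-1 * t0) + (6%:R * F2 * a ^+ 2 * b ^+ 2 * (6%:R)^-1 * t0 ^+ 2) + (4%:R * F2 * a ^+ 3 * b * (6%:R)^-1 * t0 ^+ 3) + (1%:R * F2 * a ^+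 4 * (6%:R)^-1 * t0 ^+ 4) + (1%:R * F2 * b ^+ 4 * (6%:R)^-1) + (1%:R * G0 * a ^+ 2) + (2%:R * G1 * a * b) + (2%:R * G1 * a ^+ 2 * t0) + (2%:R * G2 * a * b * t0) + (1%:R * G2 * a ^+ 2 * t0 ^+ 2) + (1%:R * G2 * b ^+ 2) + (28%:R * a ^+ 2 * b ^+ 6 * (108%:R)^-1) + (168%:R * a ^+ 3 * b ^+ 5 * (108%:R)^-1 * t0) + (420%:R * a ^+ 4 * b ^+ 4 * (108%:R)^-1 * t0 ^+ 2) + (560%:R * a ^+ 5 * b ^+ 3 * (108%:R)^-1 * t0 ^+ 3) + (420%:R * a ^+ 6 * b ^+ 2 * (108%:R)^-1 * t0 ^+ 4) + (168%:R * a ^+ 7 * b * (108%:R)^-1 * t0 ^+ 5) + (28%:R * a ^+ 8 * (108%:R)^-1 * t0 ^+ 6))%:P + (((- 2%:R) * F0 * (4%:R)^-1) + (4%:R * a * b ^+ 3 * (6%:R)^-1 * t0) + (6%:R * a ^+ 2 * b ^+ 2 * (6%:R)^-1 * t0 ^+ 2) + (4%:R * a ^+ 3 * b * (6%:R)^-1 * t0 ^+ 3) + (1%:R * a ^+ 4 * (6%:R)^-1 * t0 ^+ 4) + (1%:R * b ^+ 4 * (6%:R)^-1))%:P * Fr * 'X + ((4%:R * F0 * a ^+ 3 * b * (6%:R)^-1) + (4%:R * F0 * a ^+ 4 * (6%:R)^-1 * t0) + ((- 2%:R) * F1 * F2 * (4%:R)^-1) + (6%:R * F1 * a ^+ 2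 * b ^+ 2 * (6%:R)^-1) + (12%:R * F1 * a ^+ 3 * b * (6%:R)^-1 * t0) + (6%:R * F1 * a ^+ 4 * (6%:R)^-1 * t0 ^+ 2) + (4%:R * F2 * a * b ^+ 3 * (6%:R)^-1) + (12%:R * F2 * a ^+ 2 * b ^+ 2 * (6%:R)^-1 * t0) + (12%:R * F2 * a ^+ 3 * b * (6%:R)^-1 * t0 ^+ 2) + (4%:R * F2 * a ^+ 4 * (6%:R)^-1 * t0 ^+ 3) + (1%:R * G1 * a ^+ 2) + (2%:R * G2 * a * b) + (2%:R * G2 * a ^+ 2 * t0) + (56%:R * a ^+ 3 * b ^+ 5 * (108%:R)^-1) + (280%:R * a ^+ 4 * b ^+ 4 * (108%:R)^-1 * t0) + (560%:R * a ^+ 5 * b ^+ 3 * (108%:R)^-1 * t0 ^+ 2) + (560%:R * a ^+ 6 * b ^+ 2 * (108%:R)^-1 * t0 ^+ 3) + (280%:R * a ^+ 7 * b * (108%:R)^-1 * t0 ^+ 4) + (56%:R * a ^+ 8 * (108%:R)^-1 * t0 ^+ 5))%:P * 'X + (((- 2%:R) * F1 * (4%:R)^-1) + (4%:R * a * b ^+ 3 * (6%:R)^-1) + (12%:R * a ^+ 2 * b ^+ 2 * (6%:R)^-1 * t0) + (12%:R * a ^+ 3 * b * (6%:R)^-1 * t0 ^+ 2) + (4%:R * a ^+ 4 * (6%:R)^-1 * t0 ^+ 3))%:P * Fr * 'X ^+ 2 + ((1%:R * F0 * a ^+ 4 * (6%:R)^-1) + (4%:R * F1 * a ^+ 3 *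 b * (6%:R)^-1) + (4%:R * F1 * a ^+ 4 * (6%:R)^-1 * t0) + (6%:R * F2 * a ^+ 2 * b ^+ 2 * (6%:R)^-1) + (12%:R * F2 * a ^+ 3 * b * (6%:R)^-1 * t0) + (6%:R * F2 * a ^+ 4 * (6%:R)^-1 * t0 ^+ 2) + ((- 1%:R) * F2 ^+ 2 * (4%:R)^-1) + (1%:R * G2 * a ^+ 2) + (70%:R * a ^+ 4 * b ^+ 4 * (108%:R)^-1) + (280%:R * a ^+ 5 * b ^+ 3 * (108%:R)^-1 * t0) + (420%:R * a ^+ 6 * b ^+ 2 * (108%:R)^-1 * t0 ^+ 2) + (280%:R * a ^+ 7 * b * (108%:R)^-1 * t0 ^+ 3) + (70%:R * a ^+ 8 * (108%:R)^-1 * t0 ^+ 4))%:P * 'X ^+ 2 + (((- 2%:R) * F2 * (4%:R)^-1) + (6%:R * a ^+ 2 * b ^+ 2 * (6%:R)^-1) + (12%:R * a ^+ 3 * b * (6%:R)^-1 * t0) + (6%:R * a ^+ 4 * (6%:R)^-1 * t0 ^+ 2))%:P * Fr * 'X ^+ 3 + (((- 1%:R) * (4%:R)^-1))%:P * Fr ^+ 2 * 'X ^+ 4 + ((1%:R * F1 * a ^+ 4 * (6%:R)^-1) + (4%:R * F2 * a ^+ 3 * b * (6%:R)^-1) + (4%:R * F2 * a ^+ 4 * (6%:R)^-1 * t0) + (56%:R * a ^+ 5 * b ^+ 3 * (108%:R)^-1) + (168%:R * a ^+ 6 * b ^+ 2 * (108%:R)^-1 * t0) + (168%:R * a ^+ 7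 * b * (108%:R)^-1 * t0 ^+ 2) + (56%:R * a ^+ 8 * (108%:R)^-1 * t0 ^+ 3))%:P * 'X ^+ 3 + ((1%:R * F2 * a ^+ 4 * (6%:R)^-1) + (28%:R * a ^+ 6 * b ^+ 2 * (108%:R)^-1) + (56%:R * a ^+ 7 * b * (108%:R)^-1 * t0) + (28%:R * a ^+ 8 * (108%:R)^-1 * t0 ^+ 2))%:P * 'X ^+ 4 + ((1%:R * a ^+ 4 * (6%:R)^-1))%:P * Fr * 'X ^+ 5 + ((4%:R * a ^+ 3 * b * (6%:R)^-1) + (4%:R * a ^+ 4 * (6%:R)^-1 * t0))%:P * Fr * 'X ^+ 4 + ((1%:R * a ^+ 2))%:P * Gr * 'X ^+ 3 + ((2%:R * a * b) + (2%:R * a ^+ 2 * t0))%:P * Gr * 'X ^+ 2 + ((2%:R * a * b * t0) + (1%:R * a ^+ 2 * t0 ^+ 2) + (1%:R * b ^+ 2))%:P * Gr * 'X + ((1%:R * a ^+ 8 * (108%:R)^-1))%:P * 'X ^+ 6 + ((8%:R * a ^+ 7 * b * (108%:R)^-1) + (8%:R * a ^+ 8 * (108%:R)^-1 * t0))%:P * 'X ^+ 5).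
Proof.
move=> hF hG; rewrite /Ppoly /p0 /p1.
rewrite !(comp_polyD, comp_polyM, cpXn, comp_polyZ, comp_polyX, comp_polyC) hF hG.
rewrite -!mul_polyC.
ring.
Qed.



Lemma coef01 (L : fieldType) (q0 q1 : L) (R Q : {poly L}) :
  q0%:P + q1%:P * 'X + 'X^2 * R = Q * 'X^2 -> q0 = 0 /\ q1 = 0.
Proof.
move=> E; split.
  by move: (congr1 (fun p : {poly L} => p`_0) E); rewrite /= !coefD coefC coefMX coefXnM coefMXn /= !addr0.
by move: (congr1 (fun p : {poly L} => p`_1) E); rewrite /= !coefD coefC coefMX coefXnM coefMXn /= coefC /= add0r addr0.
Qed.

Notation K' z := ((z%:P)%:P).

Lemma cpN (R : comNzRingType) (p r : {poly R}) : (- p) \Po r = - (p \Po r).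
Proof. exact: rmorphN. Qed.

Section MP.
Variables (R : comNzRingType) (r : {poly R}).
Local Notation phi := (map_poly (fun q : {poly R} => q \Po r)).
Lemma mpD p q : phi (p + q) = phi p + phi q.
Proof. exact: (rmorphD (map_poly (comp_poly r))). Qed.
Lemma mpB p q : phi (p - q) = phi p - phi q.
Proof. exact: (rmorphB (map_poly (comp_poly r))). Qed.
Lemma mpM p q : phi (p * q) = phi p * phi q.
Proof. exact: (rmorphM (map_poly (comp_poly r))). Qed.
Lemma mpXn p n : phi (p ^+ n) = phi p ^+ n.
Proof. exact: (rmorphXn (map_poly (comp_poly r))). Qed.
Lemma mpN p : phi (- p) = - phi p.
Proof. exact: (rmorphN (map_poly (comp_poly r))). Qed.
Lemma mpX : phi 'X = 'X.
Proof. exact: map_polyX. Qed.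
Lemma mpC p : phi (p%:P) = (p \Po r)%:P.
Proof. exact: map_polyC. Qed.
End MP.

Lemma Hexp (L : fieldType) (f g : {poly L}) (a b t0 x0 c d e gm F0 F1 F2 G0 G1 G2 : L) (Fr Gr : {poly L}) :
  f \Po ('X + t0%:P) = F0%:P + F1%:P * 'X + F2%:P * 'X^2 + 'X^3 * Fr ->
  g \Po ('X + t0%:P) = G0%:P + G1%:P * 'X + G2%:P * 'X^2 + 'X^3 * Gr ->
  shift2 (curve_eq f g (tris_h a b c d e gm)) x0 t0 = K' (((a * t0 + b) * x0 + (c * t0^+3 + d * t0^+2 + e * t0 + gm))^+2 - x0^+3 - F0 * x0 - G0) + K' (2%:R * ((a * t0 + b) * x0 + (c * t0^+3 + d * t0^+2 + e * t0 + gm)) * (a * t0 + b) - 3%:R * x0^+2 - F0) * 'X + K' (2%:R * ((a * t0 + b) * x0 + (c * t0^+3 + d * t0^+2 + e * t0 + gm)) * (a * x0 + (3%:R * c * t0^+2 + 2%:R * d * t0 + e)) - F1 * x0 - G1) * tvar L + K' ((a * t0 + b)^+2 - 3%:R * x0) * 'X^2 + K' (2%:R * (a * t0 + b) * (a * x0 + (3%:R * c * t0^+2 + 2%:R * d * t0 + e)) + 2%:R * ((a * t0 + b) * x0 + (c * t0^+3 + d * t0^+2 + e * t0 + gm)) * a - F1) * 'X * tvar L + K' ((a * x0 + (3%:R * c * t0^+2 + 2%:R * d * t0 + e))^+2 + 2%:R * ((a * t0 + b) * x0 + (c * t0^+3 + d * t0^+2 + e * t0 + gm)) * (3%:R * c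 * t0 + d) - F2 * x0 - G2) * tvar L ^+ 2 + 'X^3 * (tvar L ^+ 0 * (K' (((- 1%:R))))) + 'X^2 * (tvar L ^+ 1 * (K' ((1%:R * a ^+ 2)) * tvar L + K' ((2%:R * a * b) + (2%:R * a ^+ 2 * t0)))) + 'X^1 * (tvar L ^+ 2 * (K' (((- 1%:R) * F2) + (12%:R * a * c * t0 ^+ 2) + (6%:R * a * d * t0) + (2%:R * a * e) + (2%:R * a ^+ 2 * x0) + (6%:R * b * c * t0) + (2%:R * b * d)) + K' ((2%:R * a * c)) * tvar L ^+ 2 + K' ((8%:R * a * c * t0) + (2%:R * a * d) + (2%:R * b * c)) * tvar L + K' (((- 1%:R))) * Fr%:P * tvar L)) + 'X^0 * (tvar L ^+ 3 * (K' ((2%:R * a * c * x0) + (10%:R * c * d * t0) + (2%:R * c * e) + (15%:R * c ^+ 2 * t0 ^+ 2) + (1%:R * d ^+ 2)) * tvar L + K' ((8%:R * a * c * t0 * x0) + (2%:R * a * d * x0) + (2%:R * b * c * x0) + (20%:R * c * d * t0 ^+ 2) + (8%:R * c * e * t0) + (2%:R * c * gm) + (20%:R * c ^+ 2 * t0 ^+ 3) + (2%:R * d * e) + (4%:R * d ^+ 2 * t0)) + K' ((1%:R * c ^+ 2)) * tvar L ^+ 3 + K' ((2%:R * c * d) + (6%:R * c ^+ 2 * t0)) * tvar L ^+ 2 + K' (((- 1%:R) * x0)) * Fr%:P + K' (((- 1%:R))) * Gr%:P)).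
Proof.
move=> hF hG; rewrite /shift2 /curve_eq /tris_h.
rewrite !(comp_polyD, cpN, comp_polyM, cpXn, comp_polyX, comp_polyC).
rewrite !(mpD, mpN, mpM, mpXn, mpX, mpC).
rewrite !(comp_polyD, comp_polyM, cpXn, comp_polyZ, comp_polyX, comp_polyC) hF hG.
rewrite /tvar -!mul_polyC.
ring.
Qed.

Theorem lemma3p5 (k L : fieldType) (iota : {rmorphism k -> L})
  (f g : {poly k}) (a b t0 : L) :
  [pchar k] =i pred0 ->
  (size f <= 5)%N -> (size g <= 7)%N ->
  FamL_data (map_poly iota f) (map_poly iota g) a b t0 ->
  exists c d e : L -> L, forall gamma : L,
    triple_sing_at (map_poly iota f) (map_poly iota g)
      (tris_h a b (c gamma) (d gamma) (e gamma) gamma)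
      (Qx a b t0) (Qy (map_poly iota f) a b t0) t0.
Proof.
move=> hchar _ _ [ht0 hl0 hF0 hdvd].
have hn := @nz_nat k L iota hchar.
set f' := map_poly iota f in hF0 hdvd *; set g' := map_poly iota g in hdvd *.
have [F0 [F1 [F2 [Fr [hF F0E]]]]] : exists F0 F1 F2 Fr,
    f' \Po ('X + t0%:P) = F0%:P + F1%:P * 'X + F2%:P * 'X^2 + 'X^3 * Fr
    /\ F0 = f'.[t0].
  set P := f' \Po ('X + t0%:P).
  exists P`_0, P`_1, P`_2, (drop_poly 3 P).
  split; first exact: taylor3.
  by rewrite -horner_coef0 horner_comp hornerD hornerX hornerC add0r.
have [G0 [G1 [G2 [Gr hG]]]] : exists G0 G1 G2 Gr,
    g' \Po ('X + t0%:P) = G0%:P + G1%:P * 'X + G2%:P * 'X^2 + 'X^3 * Gr.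
  set P := g' \Po ('X + t0%:P).
  exists P`_0, P`_1, P`_2, (drop_poly 3 P).
  exact: taylor3.
rewrite -F0E in hF0.
have [hp0 hp1] : p0 a b t0 F0 G0 = 0 /\ p1 a b t0 F0 F1 G0 G1 = 0.
  case/dvdpP: hdvd => q Hq.
  have E := @Pexp _ _ _ a b _ _ _ _ _ _ _ _ _ hF hG.
  rewrite Hq comp_polyM cpXn comp_polyB comp_polyX comp_polyC addrK in E.
  exact: (@coef01 _ _ _ _ _ (esym E)).
exists (fun gm => cc a b t0 F0 F1 F2 G2 gm), (fun gm => dd a b t0 F0 F1 F2 G2 gm),
  (fun gm => ee a b t0 F0 F1 F2 G2 gm) => gm.
have -> : Qx a b t0 = x0 a b t0 by [].
have -> : Qy f' a b t0 = y0 a b t0 F0 by rewrite /Qy F0E.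
have HE := @Hexp _ _ _ a b t0 (x0 a b t0) (cc a b t0 F0 F1 F2 G2 gm) (dd a b t0 F0 F1 F2 G2 gm)
  (ee a b t0 F0 F1 F2 G2 gm) gm _ _ _ _ _ _ _ _ hF hG.
rewrite S0E // S1E S2E Y0E k00 // k10 // (@k01 _ a b t0 F0 F1 G0 G1) // k20 // k11 // k02 // in HE.
rewrite !polyC0 !mul0r !add0r in HE.
split.
- by rewrite /tris_h !(hornerD, hornerM, hornerC, hornerX, hornerZ, horner_exp) -Y0E -(@S0E _ a b t0 F0 F1 F2 G2 gm).
- move=> i j hij; rewrite HE !coefD.
  move: hij; case: i => [|[|[|i]]]; case: j => [|[|[|j]]] //= _;
    by rewrite !coef_XaVb ?addr0.
- move=> H; move: (H 3%N 0%N erefl); rewrite HE !coefD.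
  rewrite [X in _ + X + _ + _]coef_XaVb // [X in _ + X + _]coef_XaVb //.
  rewrite [X in _ + X]coef_XaVb // !addr0.
  rewrite coefXnM /= subnn expr0 mul1r !coefC /=.
  by move/eqP; rewrite oppr_eq0 oner_eq0.
Qed.
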